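(* Let $\phi$ be an $n$-cube USO and let $\psi$ be a kaleidoscope for $\phi$. Let $F\subseteq[2n]$ and let $\psi'$ be the mirror image of $\psi$ along dimensions $F$. Then $\psi'$ contains $\phi$; that is, there exists $V\subseteq\{n+1,\dots,2n\}$ such that $\psi'(U)_L=\phi(U_L)$ for all $U$ with $V\subseteq U\subseteq V\cup[n]$.
   Context: For sets $U,V$ let $U\oplus V=(U\cup V)\setminus(U\cap V)$. An $m$-cube orientation on the vertex set of all subsets of $[m]$ has, for each vertex $V$ and $i\in[m]$, exactly one of the directed edges $V\to V\oplus\{i\}$, $V\oplus\{i\}\to V$; it is identified with its outmap $V\mapsto\{i: V\to V\oplus\{i\}\}$. It is a unique sink orientation (USO) if every face (subgraph induced by an interval $\{X: A\subseteq X\subseteq B\}$) has exactly one sink. For $V\subseteq[2n]$ write $V_L=V\cap[n]$ and $V_H=\{i-n: i\in V\cap\{n+1,\dots,2n\}\}$. A $2n$-cube USO $\psi$ is a kaleidoscope for the $n$-cube USO $\phi$ if $\psi(V)_L=\phi(V_L\oplus V_H)$ for all $V\subseteq[2n]$. For an $m$-cube USO $\psi$ and $F\subseteq[m]$, the mirror image of $\psi$ along dimensions $F$ is the USO $\psi'$ with $\psi'(V)=\psi(V\oplus F)$ for all $V\subseteq[m]$. *)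

(* Defs.v *)
(* Dimensions [m] = {1..m} are modelled by 'I_m = {0..m-1};
   [2n] is 'I_(n + n), with [n] the image of lshift and {n+1..2n} the image of rshift. *)
From mathcomp Require Import all_boot.
Set Implicit Arguments. Unset Strict Implicit. Unset Printing Implicit Defensive.

Definition setSD (T : finType) (U V : {set T}) : {set T} := (U :|: V) :\: (U :&: V).

(* An m-cube orientation, given by its outmap: for each vertex V and direction i,
   exactly one of V -> V(+){i}, V(+){i} -> V. *)
Definition is_orientation (m : nat) (psi : {set 'I_m} -> {set 'I_m}) : Prop :=
  forall (V : {set 'I_m}) (i : 'I_m),
    (i \in psi V) = (i \notin psi (setSD V [set i])).

Definition is_sink_of_face (m : nat) (psi : {set 'I_m} -> {set 'I_m})
    (A B X : {set 'I_m}) : Prop :=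
  A \subset X /\ X \subset B /\ psi X :&: (B :\: A) = set0.

Definition is_USO (m : nat) (psi : {set 'I_m} -> {set 'I_m}) : Prop :=
  is_orientation psi /\
  forall A B : {set 'I_m}, A \subset B ->
    exists X, is_sink_of_face psi A B X /\
      forall Y, is_sink_of_face psi A B Y -> Y = X.

Definition low (n : nat) (V : {set 'I_(n + n)}) : {set 'I_n} :=
  [set i : 'I_n | lshift n i \in V].
Definition high (n : nat) (V : {set 'I_(n + n)}) : {set 'I_n} :=
  [set i : 'I_n | rshift n i \in V].

Definition lowdims (n : nat) : {set 'I_(n + n)} := [set lshift n i | i : 'I_n].
Definition highdims (n : nat) : {set 'I_(n + n)} := [set rshift n i | i : 'I_n].

Definition is_kaleidoscope (n : nat) (phi : {set 'I_n} -> {set 'I_n})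
    (psi : {set 'I_(n + n)} -> {set 'I_(n + n)}) : Prop :=
  is_USO psi /\ forall V, low (psi V) = phi (setSD (low V) (high V)).

Definition mirror (m : nat) (psi : {set 'I_m} -> {set 'I_m}) (F : {set 'I_m}) :
    {set 'I_m} -> {set 'I_m} := fun V => psi (setSD V F).

(* Main.v *)
Require Import Defs.
From mathcomp Require Import all_boot.

Lemma in_setSD (T : finType) (U V : {set T}) x :
  (x \in Defs.setSD U V) = (x \in U) (+) (x \in V).
Proof. rewrite /setSD !inE; by case: (x \in U); case: (x \in V). Qed.

Theorem lemma6p5 (n : nat) (phi : {set 'I_n} -> {set 'I_n})
    (psi : {set 'I_(n + n)} -> {set 'I_(n + n)}) (F : {set 'I_(n + n)}) :
  is_USO phi -> is_kaleidoscope phi psi ->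
  exists V : {set 'I_(n + n)}, V \subset highdims n /\
    forall U : {set 'I_(n + n)}, V \subset U -> U \subset V :|: lowdims n ->
      low (mirror psi F U) = phi (low U).
Proof.
move=> _ [_ Hk].
exists ((fun i : 'I_n => rshift n i) @: Defs.setSD (low F) (high F)); split.
  by apply/subsetP => x /imsetP [i _ ->]; apply/imsetP; exists i.
move=> U /subsetP HVU /subsetP HUV.
rewrite /mirror Hk; congr phi.
have HV : forall i, (rshift n i \in U) = (i \in Defs.setSD (low F) (high F)).
  move=> i; apply/idP/idP => H.
    have := HUV _ H; rewrite in_setU => /orP [/imsetP [j Hj /rshift_inj ->] //|].
    move=> /imsetP [j _ E].
    exfalso; have := f_equal (@nat_of_ord _) E => /=.
    have := ltn_ord j => /[swap] <-; by rewrite ltnNge leq_addr.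
  by apply: HVU; apply/imsetP; exists i.
apply/setP => i.
rewrite /Defs.setSD /low /high !inE HV /Defs.setSD !inE.
by case: (lshift n i \in U); case: (lshift n i \in F); case: (rshift n i \in U);
  case: (rshift n i \in F).
Qed.
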